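(* Let $X$ and $Y$ be slices that are not jointly spacelike (i.e. $X\cup Y$ is not spacelike). Then the presheaf $(X\wedge Y)(-):\mathsf{Slice}^{op}\to\mathsf{Set}$ is not representable.
   Context: Fix a connected, time-orientable Lorentzian manifold $\mathcal{M}$ with a fixed time-orientation (no further causality assumptions). A causal curve is an equivalence class, up to monotone reparametrisation, of smooth regular paths $\mu:\iota\to\mathcal{M}$ ($\iota\subseteq\mathbb{R}$ an interval) whose tangent is everywhere timelike or null; it is future-directed if the tangent is everywhere future-directed. Write $x\prec y$ if $x=y$ or there is a future-directed causal curve from $x$ to $y$. A region $A\subseteq\mathcal{M}$ is spacelike if no two distinct points $x,y\in A$ satisfy $x\prec y$. A slice is a closed spacelike subset of $\mathcal{M}$; slices $X,Y$ are jointly spacelike if $X\cup Y$ is spacelike. For regions $A,B$, $\mathcal{C}[A,B]$ is the set of future-directed causal curves passing through $A$ and then $B$: for a representative path $\mu:\iota\to\mathcal{M}$, there exists $q\in\iota$ with $\mu(q)\in B$, and for every such $q$ there exists $p\le q$ with $\mu(p)\in A$. The category $\mathsf{Slice}$ has slices as objects, $\mathsf{Slice}(X,Y)=\mathcal{P}(\mathcal{C}[X,Y])$ (the powerset), composition $T\circ S:=T\cap S$, identities $1_X=\mathcal{C}[X,X]$. For slices $X,Y$, $(X\wedge Y)(-)$ is the presheaf with $(X\wedge Y)(Z):=\mathcal{P}(\mathcal{C}[Z,X]\cap\mathcal{C}[Z,Y])$ and $(X\wedge Y)(U:Z'\to Z):C\mapsto C\cap U$. *)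

(* Defs.v *)
From HB Require Import structures.
From mathcomp Require Import all_boot all_order all_algebra.
From mathcomp Require Import all_classical all_reals all_analysis.
Set Implicit Arguments. Unset Strict Implicit. Unset Printing Implicit Defensive.
Import Order.TTheory GRing.Theory Num.Theory.
Import numFieldNormedType.Exports.
Local Open Scope classical_set_scope.
Local Open Scope ring_scope.

(* Smoothness (C^infinity) of a map between normed spaces on a set A:   *)
(* all iterated directional derivatives exist on A and are continuous  *)
(* at every point of A (A is meant to be open).                        *)
Section Smooth.
Context {R : realType} {V W : normedModType R}.

Fixpoint iterD (vs : seq V) (f : V -> W) : V -> W :=
  match vs with
  | [::] => f
  | v :: vs' => fun x => derive (iterD vs' f) x v
  end.

Definition smooth_on (A : set V) (f : V -> W) : Prop :=
  forall vs : seq V,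
    (forall x, A x -> {for x, continuous (iterD vs f)}) /\
    (forall v x, A x -> derivable (iterD vs f) x v).
End Smooth.

Definition bil {R : realType} {n : nat} (G : 'M[R]_n) (v w : 'rV[R]_n) : R :=
  (v *m G *m w^T) 0 0.

Definition lorentz_signature {R : realType} {n : nat} (G : 'M[R]_n) : Prop :=
  G^T = G /\
  exists (P : 'M[R]_n) (k0 : 'I_n),
    P \in unitmx /\
    P^T *m G *m P = diag_mx (\row_k (if k == k0 then -1 else 1)).

(* A time-oriented Lorentzian manifold, presented by an atlas.  Every   *)
(* chart i has domain dom i (open in M), a chart map phi i, its inverse *)
(* psi i; the metric is given in chart i by the matrix field g i and    *)
(* the fixed time orientation by a timelike continuous vector field T i.*)
Record LorentzData (R : realType) (M : topologicalType) (n : nat) := {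
  chart_idx : Type;
  dom : chart_idx -> set M;
  phi : chart_idx -> M -> 'rV[R]_n;
  psi : chart_idx -> 'rV[R]_n -> M;
  gmet : chart_idx -> 'rV[R]_n -> 'M[R]_n;
  tfield : chart_idx -> 'rV[R]_n -> 'rV[R]_n
}.
Arguments chart_idx {R M n} l.
Arguments dom {R M n} l i.
Arguments phi {R M n} l i.
Arguments psi {R M n} l i.
Arguments gmet {R M n} l i.
Arguments tfield {R M n} l i.

Section Lorentz.
Context {R : realType} {M : topologicalType} {n : nat}.
Variable L : LorentzData R M n.

Definition cimg (i : chart_idx L) : set 'rV[R]_n := phi L i @` dom L i.

Definition transition (i j : chart_idx L) : 'rV[R]_n -> 'rV[R]_n :=
  phi L j \o psi L i.

Definition is_time_oriented_lorentzian : Prop :=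
  (forall i, open (dom L i)) /\
  (forall i, open (cimg i)) /\
  (forall i x, dom L i x -> psi L i (phi L i x) = x) /\
  (forall i y, cimg i y -> dom L i (psi L i y) /\ phi L i (psi L i y) = y) /\
  (forall i, {within dom L i, continuous (phi L i)}) /\
  (forall i, {within cimg i, continuous (psi L i)}) /\
  (forall x, exists i, dom L i x) /\
  (forall i j, smooth_on (phi L i @` (dom L i `&` dom L j)) (transition i j)) /\
  (forall i, smooth_on (cimg i) (gmet L i)) /\
  (forall i y, cimg i y -> lorentz_signature (gmet L i y)) /\
  (forall i j x, dom L i x -> dom L j x -> forall v w,
     bil (gmet L i (phi L i x)) v w =
     bil (gmet L j (phi L j x))
         (derive (transition i j) (phi L i x) v)
         (derive (transition i j) (phi L i x) w)) /\
  (forall i, {within cimg i, continuous (tfield L i)}) /\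
  (forall i y, cimg i y -> bil (gmet L i y) (tfield L i y) (tfield L i y) < 0) /\
  (forall i j x, dom L i x -> dom L j x ->
     tfield L j (phi L j x) =
     derive (transition i j) (phi L i x) (tfield L i (phi L i x))).

(* Paths: a nondegenerate interval iota together with a map mu; only   *)
(* the values of mu on iota matter.  A path is smooth if mu is smooth  *)
(* on some open set O containing iota (this accounts for endpoints).   *)
Definition Path := (set R * (R -> M))%type.

Definition velocity (i : chart_idx L) (mu : R -> M) (t : R) : 'rV[R]_n :=
  derive (phi L i \o mu) t 1.

Definition smooth_path (p : Path) : Prop :=
  is_interval p.1 /\ (exists a b, p.1 a /\ p.1 b /\ a < b) /\
  exists O : set R, open O /\ p.1 `<=` O /\
    (forall t, O t -> {for t, continuous p.2}) /\
    (forall t, O t -> exists i, dom L i (p.2 t) /\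
       exists N : set R, open N /\ N t /\ N `<=` O /\
         p.2 @` N `<=` dom L i /\ smooth_on N (phi L i \o p.2)).

Definition causal_path (p : Path) : Prop :=
  smooth_path p /\
  forall t, p.1 t -> forall i, dom L i (p.2 t) ->
    velocity i p.2 t != 0 /\
    bil (gmet L i (phi L i (p.2 t))) (velocity i p.2 t) (velocity i p.2 t) <= 0.

Definition fd_path (p : Path) : Prop :=
  causal_path p /\
  forall t, p.1 t -> forall i, dom L i (p.2 t) ->
    bil (gmet L i (phi L i (p.2 t))) (velocity i p.2 t)
        (tfield L i (phi L i (p.2 t))) < 0.

Definition reparam (p q : Path) : Prop :=
  exists h : R -> R,
    (forall s, q.1 s -> p.1 (h s)) /\
    (forall t, p.1 t -> exists s, q.1 s /\ h s = t) /\
    (forall s s', q.1 s -> q.1 s' -> s < s' -> h s < h s') /\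
    (forall s, q.1 s -> q.2 s = p.2 (h s)).

(* causal curves: equivalence classes of causal paths *)
Definition Curve := set Path.

Definition curve_of (p : Path) : Curve := [set q | causal_path q /\ reparam p q].

Definition fd_curve (c : Curve) : Prop :=
  exists p, fd_path p /\ c = curve_of p.

Definition cprec (x y : M) : Prop :=
  x = y \/
  exists c, fd_curve c /\ exists p, c p /\ exists a b,
    a < b /\ p.1 = [set t | a <= t <= b] /\ p.2 a = x /\ p.2 b = y.

Definition spacelike (A : set M) : Prop :=
  forall x y, A x -> A y -> x <> y -> ~ cprec x y.

Definition slice (A : set M) : Prop := closed A /\ spacelike A.

Definition CAB (A B : set M) : set Curve :=
  [set c | fd_curve c /\ exists p, c p /\
     (exists q, p.1 q /\ B (p.2 q)) /\
     (forall q, p.1 q -> B (p.2 q) -> exists r, p.1 r /\ r <= q /\ A (p.2 r))].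

(* hom-sets of Slice: Slice(Z,W) = P(C[Z,W]); composition = intersection *)
Definition SliceHom (Z W : set M) : set (set Curve) :=
  [set U | U `<=` CAB Z W].

Definition wedge_obj (X Y Z : set M) : set (set Curve) :=
  [set D | D `<=` CAB Z X `&` CAB Z Y].

(* (X ∧ Y)(-) is representable: there is a slice W and a natural
   isomorphism Slice(-,W) ≅ (X ∧ Y)(-) of presheaves on Slice. *)
Definition wedge_representable (X Y : set M) : Prop :=
  exists W, slice W /\
  exists Phi : set M -> set Curve -> set Curve,
    (forall Z, slice Z ->
       (forall U, SliceHom Z W U -> wedge_obj X Y Z (Phi Z U)) /\
       (forall U U', SliceHom Z W U -> SliceHom Z W U' ->
          Phi Z U = Phi Z U' -> U = U') /\
       (forall D, wedge_obj X Y Z D -> exists U, SliceHom Z W U /\ Phi Z U = D)) /\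
    (* naturality in Z *)
    (forall Z Z', slice Z -> slice Z' ->
       forall U, SliceHom Z' Z U -> forall T, SliceHom Z W T ->
         Phi Z' (T `&` U) = Phi Z T `&` U).
End Lorentz.

(* Main.v *)
Require Import Defs.
From HB Require Import structures.
From mathcomp Require Import all_boot all_order all_algebra.
From mathcomp Require Import all_classical all_reals all_analysis.
From mathcomp Require Import lra.
Local Open Scope classical_set_scope.

Section Helpers.
Import Order.TTheory GRing.Theory Num.Theory.
Local Open Scope ring_scope.
Context {R : realType} {M : topologicalType} {n : nat} (L : LorentzData R M n).

Lemma sub_fd (p : Path) (I : set R) : fd_path L p -> is_interval I ->
  (exists a b, I a /\ I b /\ a < b) -> I `<=` p.1 -> fd_path L (I, p.2).
Proof.
case: p => P f /= [ [ [_ [_ [Op [HO [PO HO2]]]]] Hc] Hf] HI Hn HIP.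
split; [split|].
- split; first exact: HI.
  split; first exact: Hn.
  exists Op; split; first exact: HO.
  split; first by move=> t /HIP /PO.
  exact: HO2.
- by move=> t /HIP Ht i Hi; apply: Hc.
- by move=> t /HIP Ht i Hi; apply: Hf.
Qed.

Lemma self_curve p : fd_path L p -> curve_of L p p.
Proof.
move=> Hp; split; first exact: Hp.1.
exists id; split => //; split; first by move=> t Ht; exists t.
by split.
Qed.

Lemma fd_curve_of p : fd_path L p -> fd_curve L (curve_of L p).
Proof. by move=> Hp; exists p. Qed.

Lemma key (A B W : set M) (p0 : Path) (t0 : R) :
  fd_path L p0 -> p0.1 t0 -> (forall t, p0.1 t -> t0 <= t) ->
  A (p0.2 t0) -> closed B -> ~ B (p0.2 t0) ->
  CAB L A W (curve_of L p0) ->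
  CAB L A W `<=` CAB L W A -> CAB L W W `<=` CAB L W B -> False.
Proof.
move=> fd0 Ht0 Hmin HA cB nB cW H2 H3.
have [_ [p'' [ [_ [h [h1 [h2 [h3 h4]]]]] [_ Hall]]]] := H2 _ cW.
have [s [Hs hs]] := h2 _ Ht0.
have [r [Hr [rs HWr]]] : exists r, p''.1 r /\ r <= s /\ W (p''.2 r).
  by apply: Hall => //; rewrite h4 // hs.
have hrt : h r = t0.
  move: rs; rewrite le_eqVlt => /orP [/eqP -> //|lt_rs].
  have := h3 _ _ Hr Hs lt_rs; rewrite hs => lt.
  have := Hmin _ (h1 _ Hr).
  by rewrite leNgt lt.
have HW : W (p0.2 t0) by rewrite -hrt -h4.
have [ [ [Hint [ [u [v [Hu [Hv uv]]]] [Op [_ [PO HO]]]]] _] _] := fd0.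
have Hct := HO.1 _ (PO _ Ht0).
have Hnb : nbhs (p0.2 t0) (~` B).
  apply: open_nbhs_nbhs; split => //; exact: closed_openC.
have := Hct _ Hnb => /nbhs_ballP [e /= e0 He].
have t0v : t0 < v.
  have := Hmin _ Hu; move=> t0u; exact: le_lt_trans t0u uv.
pose t1 := Num.min v (t0 + e / 2).
have t0t1 : t0 < t1.
  rewrite /t1 lt_min t0v /=; lra.
have t1v : t1 <= v by rewrite /t1 ge_min lexx.
have t1e : t1 <= t0 + e / 2 by rewrite /t1 ge_min lexx orbT.
have Hsub : [set t | t0 <= t <= t1] `<=` p0.1.
  move=> t /andP [a1 a2]; apply: (Hint t0 v) => //.
  by rewrite a1 /= (le_trans a2 t1v).
have nBs : forall t, t0 <= t <= t1 -> ~ B (p0.2 t).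
  move=> t /andP [a1 a2]; apply: He.
  rewrite /ball_ /= ltr_distlC; apply/andP; split; lra.
pose p1 : Path := ([set t | t0 <= t <= t1], p0.2).
have fd1 : fd_path L p1.
  apply: sub_fd => //.
  - move=> x y /andP [x1 x2] /andP [y1 y2] z /andP [z1 z2].
    by rewrite /= (le_trans x1 z1) (le_trans z2 y2).
  - exists t0, t1; rewrite /= lexx (ltW t0t1) lexx; split => //.
have c1W : CAB L W W (curve_of L p1).
  split; first exact: fd_curve_of.
  exists p1; split; first exact: self_curve.
  split; first by exists t0; rewrite /= lexx (ltW t0t1).
  by move=> q Hq HWq; exists q; rewrite lexx.
have [_ [p' [ [_ [g [g1 [_ [_ g4]]]]] [ [q [Hq HBq]] _]]]] := H3 _ c1W.
rewrite g4 // in HBq; exact: (nBs _ (g1 _ Hq) HBq).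
Qed.

Lemma main_dir (A B W : set M) (x y : M) :
  slice L A -> slice L B -> A x -> B y -> x <> y -> cprec L x y ->
  CAB L A A `&` CAB L A B `<=` CAB L A W ->
  CAB L A W `<=` CAB L W A -> CAB L W W `<=` CAB L W B -> False.
Proof.
move=> [_ sA] [cB sB] Ax By xy Hc.
have nBx : ~ B x by move=> Bx; exact: (sB x y Bx By xy Hc).
move: Hc => [/xy []|] [c [ [p0 [fd0 ->]] [p [Hpc [a [b [ab [H1 [H2 H3]]]]]]]]] H1' H2' H3'.
have [_ [g [g1 [g2 [g3 g4]]]]] := Hpc.
have Ha : p.1 a by rewrite H1 /= lexx (ltW ab).
have Hb : p.1 b by rewrite H1 /= lexx (ltW ab).
apply: (@key A B W p0 (g a) fd0 (g1 _ Ha)).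
- move=> t Ht; have [s' [Hs' <-]] := g2 _ Ht.
  have as' : a <= s' by move: (Hs'); rewrite H1 => /andP [].
  move: as'; rewrite le_eqVlt => /orP [/eqP <- //|lt].
  exact: ltW (g3 _ _ Ha Hs' lt).
- by rewrite -(g4 _ Ha) H2.
- exact: cB.
- rewrite -(g4 _ Ha) H2; exact: nBx.
- apply: H1'; split.
  + split; first exact: fd_curve_of.
    exists p; split; first exact: Hpc.
    split; first by exists a; rewrite H2.
    by move=> q Hq HAq; exists q; rewrite lexx.
  + split; first exact: fd_curve_of.
    exists p; split; first exact: Hpc.
    split; first by exists b; rewrite H3.
    move=> q Hq _; exists a; split => //; split; last by rewrite H2.
    by move: Hq; rewrite H1 /= => /andP [].
- exact: H2'.
- exact: H3'.
Qed.

Lemma rep_incl (X Y : set M) : wedge_representable L X Y ->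
  exists W, slice L W /\ forall Z, slice L Z ->
    (CAB L Z X `&` CAB L Z Y `<=` CAB L Z W) /\
    (CAB L Z W `<=` CAB L W X `&` CAB L W Y).
Proof.
move=> [W [sW [Phi [Hb Hn]]]]; exists W; split => //.
have subWW : forall Z, CAB L Z W `<=` CAB L W W.
  move=> Z c [fd [p [Hp [Hq Hall]]]]; split => //; exists p; split => //.
  by split => // q Hq2 HW; exists q; rewrite lexx.
pose D0 := Phi W (CAB L W W).
have HPhi : forall Z, slice L Z -> forall U, U `<=` CAB L Z W -> Phi Z U = D0 `&` U.
  move=> Z sZ U HU.
  have := Hn W Z sW sZ U HU (CAB L W W) (fun _ h => h).
  by rewrite setIidr //; apply: subset_trans HU (subWW Z).
have HD0 : D0 `<=` CAB L W X `&` CAB L W Y := (Hb W sW).1 _ (fun _ h => h).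
move=> Z sZ; split.
- have [U [HU Heq]] := (Hb Z sZ).2.2 (CAB L Z X `&` CAB L Z Y) (fun _ h => h).
  rewrite HPhi // in Heq.
  by move=> c Hc; rewrite -Heq in Hc; case: Hc => _ /HU.
- move=> c Hc; apply: HD0.
  case: (pselect (D0 c)) => // nD.
  have S1 : [set c] `<=` CAB L Z W by move=> ? ->.
  have S0 : @set0 Curve `<=` CAB L Z W by [].
  have E : Phi Z [set c] = Phi Z set0.
    rewrite !HPhi //.
    by apply/seteqP; split => z [Dz] //= zc; rewrite zc in Dz.
  have E' := (Hb Z sZ).2.1 _ _ S1 S0 E.
  have : [set c] c by [].
  by rewrite E'.
Qed.
End Helpers.

Theorem mainTheorem10 (R : realType) (M : topologicalType) (n : nat)
  (L : LorentzData R M n) :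
  is_time_oriented_lorentzian L ->
  hausdorff_space M -> @second_countable M -> connected [set: M] ->
  forall X Y : set M, slice L X -> slice L Y ->
  ~ spacelike L (X `|` Y) ->
  ~ wedge_representable L X Y.
Proof.
move=> _ _ _ _ X Y sX sY nsp Hrep.
have [W [sW H]] := @rep_incl _ _ _ L _ _ Hrep.
apply: nsp => x y Hx Hy xy Hc.
case: Hx => Hx; case: Hy => Hy.
- exact: (sX.2 x y Hx Hy xy Hc).
- apply: (@main_dir _ _ _ L _ _ _ _ _ sX sY Hx Hy xy Hc (H X sX).1).
  + by move=> c /(H X sX).2 [].
  + by move=> c /(H W sW).2 [].
- apply: (@main_dir _ _ _ L _ _ _ _ _ sY sX Hx Hy xy Hc).
  + by move=> c [c1 c2]; apply: (H Y sY).1.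
  + by move=> c /(H Y sY).2 [].
  + by move=> c /(H W sW).2 [].
- exact: (sY.2 x y Hx Hy xy Hc).
Qed.
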